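(* Let $c_m=\binom{2m+1}{m}$ for $m\ge0$. For $n\ge1$ let $P_n(x)$ be the determinant of the $(n+1)\times(n+1)$ matrix with first row $(1,x,x^2,\dots,x^n)$ and row $i+1$ equal to $(c_{i-1},c_i,\dots,c_{i-1+n})$ for $i=1,\dots,n$, and let $P^{(1)}_n(x)$ be the determinant of the $(n+1)\times(n+1)$ matrix with first row $(1,x,\dots,x^n)$ and row $i+1$ equal to $(c_i,c_{i+1},\dots,c_{i+n})$ for $i=1,\dots,n$. Set $t_n(x)=(-1)^nP_n(x)$ and $t^{(1)}_n(x)=\frac{(-1)^n}{2n+1}P^{(1)}_n(x)$. Then for all $n\ge1$: $t_n(4)=1$ and $t^{(1)}_n(4)=\frac{n+1}{2n+1}$. *)

(* Defs.v *)
From mathcomp Require Import all_boot all_order all_algebra.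
Set Implicit Arguments. Unset Strict Implicit. Unset Printing Implicit Defensive.
Import GRing.Theory Num.Theory.
Local Open Scope ring_scope.

Definition cc (m : nat) : nat := 'C(m.*2.+1, m).

Definition Pn (n : nat) : {poly rat} :=
  \det (\matrix_(i < n.+1, j < n.+1)
          if i == 0%N :> nat then 'X^j else ((cc (i.-1 + j))%:R)%:P).

Definition P1n (n : nat) : {poly rat} :=
  \det (\matrix_(i < n.+1, j < n.+1)
          if i == 0%N :> nat then 'X^j else ((cc (i + j))%:R)%:P).

Definition tn (n : nat) : {poly rat} := (-1) ^+ n *: Pn n.
Definition t1n (n : nat) : {poly rat} := ((-1) ^+ n / (n.*2.+1)%:R) *: P1n n.

(* Main.v *)
Require Import Defs.
From mathcomp Require Import all_boot all_order all_algebra.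
From mathcomp Require Import zify ring lra.
Set Implicit Arguments. Unset Strict Implicit. Unset Printing Implicit Defensive.
Import GRing.Theory Num.Theory.
Local Open Scope ring_scope.


Definition Bz (N : nat) (j : int) : nat :=
  match j with Posz m => 'C(N, m) | Negz _ => 0%N end.

Lemma Bz_pascal N j : Bz N.+1 j = (Bz N (j - 1) + Bz N j)%N.
Proof.
case: j => [[|m]|m] /=.
- by rewrite !bin0.
- by rewrite subn1 /= binS addnC.
- by [].
Qed.

Lemma Bz_pascal2 N j :
  Bz N.+2 j = (Bz N (j - 2) + 2 * Bz N (j - 1) + Bz N j)%N.
Proof.
rewrite !Bz_pascal.
have -> : j - 1 - 1 = j - 2 by lia.
lia.
Qed.

Definition ell (i k : nat) : rat :=
  (Bz i.*2.+1 (i%:Z - k%:Z))%:R - (Bz i.*2.+1 (i%:Z - k%:Z - 1))%:R.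

Arguments ell : simpl never.

Lemma ell_gt i k : (i < k)%N -> ell i k = 0.
Proof.
move=> lt; rewrite /ell.
have [m ->] : exists m, i%:Z - k%:Z = Negz m by exists (k - i.+1)%N; rewrite NegzE; lia.
have -> : Negz m - 1 = Negz m.+1 by rewrite !NegzE; lia.
by rewrite subrr.
Qed.

Lemma ell_diag i : ell i i = 1.
Proof.
rewrite /ell subrr /= bin0.
by rewrite subr0.
Qed.

Lemma ell0 k : ell 0 k = (k == 0%N)%:R.
Proof. by case: k => [|k]; [rewrite ell_diag | rewrite ell_gt]. Qed.

Lemma Bz_sym i : Bz i.*2.+1 (i%:Z + 1) = Bz i.*2.+1 i%:Z.
Proof.
rewrite -PoszD /= addn1.
have := @bin_sub i.*2.+1 i; rewrite -addnn; move=> <-; last by lia.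
by congr 'C(_, _); lia.
Qed.

Lemma ell_rec i k :
  ell i.+1 k = (if k is k'.+1 then ell i k' else 0) + 2 * ell i k + ell i k.+1.
Proof.
have E : (Bz i.*2.+1 (i%:Z - k%:Z + 1))%:R - (Bz i.*2.+1 (i%:Z - k%:Z))%:R
   = (if k is k'.+1 then ell i k' else 0) :> rat.
  case: k => [|k].
    by rewrite subr0 Bz_sym subrr.
  rewrite /ell.
  have -> : i%:Z - k.+1%:Z + 1 = i%:Z - k%:Z by lia.
  have -> : i%:Z - k.+1%:Z = i%:Z - k%:Z - 1 by lia.
  by [].
rewrite -E /ell doubleS Bz_pascal2 (Bz_pascal2 _ (_ - _ - 1)).
have -> : i.+1%:Z - k%:Z - 2 = i%:Z - k%:Z - 1 by lia.
have -> : i.+1%:Z - k%:Z - 1 = i%:Z - k%:Z by lia.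
have -> : i.+1%:Z - k%:Z = i%:Z - k%:Z + 1 by lia.
have -> : i%:Z - k.+1%:Z - 1 = i%:Z - k%:Z - 2 by lia.
have -> : i%:Z - k.+1%:Z = i%:Z - k%:Z - 1 by lia.
rewrite !mul2n -!addnn !natrD.
ring.
Qed.



Definition S (i j : nat) : rat := \sum_(0 <= k < (i + j).+1) ell i k * ell j k.

Lemma sum_zero_tail i j M P : (i < M \/ j < M)%N ->
  \sum_(M <= k < M + P) ell i k * ell j k = 0.
Proof.
move=> H; rewrite big_nat_cond big1 // => k /andP [/andP [Mk _] _].
case: H => H; first by rewrite ell_gt ?mul0r //; lia.
by rewrite (ell_gt (i:=j)) ?mulr0 //; lia.
Qed.

Lemma S_any i j M : (i < M \/ j < M)%N ->
  \sum_(0 <= k < M) ell i k * ell j k = S i j.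
Proof.
move=> H; rewrite /S.
have H1 : (i < (i+j).+1 \/ j < (i+j).+1)%N by left; lia.
set Q := maxn M (i+j).+1.
have E : forall P, (i < P \/ j < P)%N -> (P <= Q)%N ->
   \sum_(0 <= k < P) ell i k * ell j k = \sum_(0 <= k < Q) ell i k * ell j k.
  move=> P HP PQ.
  have -> : Q = (P + (Q - P))%N by lia.
  rewrite [RHS](big_cat_nat _ (n:=P)) //=; last by lia.
  by rewrite (sum_zero_tail _ HP) addr0.
rewrite E //; last by lia.
by rewrite E //; lia.
Qed.

Lemma shift_sum (f g : nat -> rat) M : f M = 0 ->
  \sum_(0 <= k < M.+1) (if k is k'.+1 then f k' else 0) * g k
  = \sum_(0 <= k < M.+1) f k * g k.+1.
Proof.
move=> fM; rewrite big_nat_recl // mul0r add0r.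
by rewrite [RHS]big_nat_recr //= fM mul0r addr0.
Qed.

Lemma S_step i j : S i.+1 j = S i j.+1.
Proof.
set M := (i + j).+2.
have HM1 : (i.+1 < M.+1 \/ j < M.+1)%N by left; lia.
have HM2 : (i < M.+1 \/ j.+1 < M.+1)%N by left; lia.
rewrite -(S_any HM1) -(S_any HM2).
have E1 : \sum_(0 <= k < M.+1) ell i.+1 k * ell j k =
   \sum_(0 <= k < M.+1) (if k is k'.+1 then ell i k' else 0) * ell j k
 + \sum_(0 <= k < M.+1) 2 * (ell i k * ell j k)
 + \sum_(0 <= k < M.+1) ell i k.+1 * ell j k.
  rewrite -!big_split /=; apply: eq_bigr => k _; rewrite ell_rec; case: k => [|k] /=; ring.
have E2 : \sum_(0 <= k < M.+1) ell i k * ell j.+1 k =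
   \sum_(0 <= k < M.+1) (if k is k'.+1 then ell j k' else 0) * ell i k
 + \sum_(0 <= k < M.+1) 2 * (ell i k * ell j k)
 + \sum_(0 <= k < M.+1) ell j k.+1 * ell i k.
  rewrite -!big_split /=; apply: eq_bigr => k _; rewrite ell_rec; case: k => [|k] /=; ring.
rewrite E1 E2 !shift_sum; try by rewrite ell_gt //; lia.
have EA : \sum_(0 <= k < M.+1) ell j k * ell i k.+1 = \sum_(0 <= k < M.+1) ell i k.+1 * ell j k.
  by apply: eq_bigr => k _; rewrite mulrC.
have EC : \sum_(0 <= k < M.+1) ell j k.+1 * ell i k = \sum_(0 <= k < M.+1) ell i k * ell j k.+1.
  by apply: eq_bigr => k _; rewrite mulrC.
rewrite EA EC; ring.
Qed.

Lemma S_val i j : S i j = ell (i + j) 0.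
Proof.
elim: i j => [|i IH] j.
  rewrite /S big_nat_recl // big1 => [|k _]; last by rewrite ell0 mul0r.
  by rewrite ell0 eqxx mul1r addr0.
by rewrite S_step IH addSnnS.
Qed.



Lemma ell_mom k : ell k 0 = 4 * (cc k)%:R - (cc k.+1)%:R.
Proof.
rewrite /ell /cc subr0 doubleS.
have -> : 'C(k.*2.+3, k.+1) = Bz k.*2.+3 (k%:Z + 1) by rewrite -PoszD addn1.
rewrite Bz_pascal2 Bz_sym.
have -> : k%:Z + 1 - 2 = k%:Z - 1 by lia.
have -> : k%:Z + 1 - 1 = k%:Z by lia.
have -> : Bz k.*2.+1 k%:Z = 'C(k.*2.+1, k) by [].
rewrite !natrD; ring.
Qed.

Lemma sum_ind n (F : nat -> rat) m :
  \sum_(l < n) F l * ((l : nat) == m)%:R = if (m < n)%N then F m else 0.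
Proof.
case: ltnP => [lt|ge].
  rewrite (bigD1 (Ordinal lt)) //= eqxx mulr1 big1 ?addr0 // => l ne.
  have -> : ((l : nat) == m) = false.
    by apply/negbTE; apply: contra ne => /eqP e; apply/eqP; apply: val_inj.
  by rewrite mulr0.
rewrite big1 // => l _.
have -> : ((l : nat) == m) = false by apply/negbTE; rewrite neq_ltn; apply/orP; left; apply: (leq_trans (ltn_ord l)).
by rewrite mulr0.
Qed.

Lemma sum_indS n (F : nat -> rat) m :
  \sum_(l < n) F l * ((l : nat).+1 == m)%:R =
  if m is m'.+1 then (if (m' < n)%N then F m' else 0) else 0.
Proof.
case: m => [|m].
  by rewrite big1 // => l _; rewrite mulr0.
by rewrite -sum_ind; apply: eq_bigr => l _; rewrite eqSS.
Qed.



Definition Umx n : 'M[rat]_n :=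
  \matrix_(i, j) (((i : nat) == j)%:R - 4 * (((i : nat).+1 == j)%:R)).

Lemma det_Umx n : \det (Umx n) = 1.
Proof.
rewrite -det_tr det_trig.
  by rewrite big1 // => i _; rewrite !mxE eqxx (_ : (i.+1 == i)%N = false) ?mulr0 ?subr0 //; lia.
apply/is_trig_mxP => i j lt; rewrite !mxE.
have -> : ((j : nat) == i) = false by apply/eqP; lia.
have -> : ((j : nat).+1 == i) = false by apply/eqP; lia.
by rewrite mulr0 subr0.
Qed.

Lemma mulU n (f : nat -> nat -> rat) (i j : 'I_n) :
  ((\matrix_(i, j) f i j) *m Umx n) i j
  = f i j - 4 * (if (j : nat) is j'.+1 then f i j' else 0).
Proof.
rewrite mxE.
under eq_bigr do rewrite !mxE mulrBr.
rewrite big_split /= sumrN.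
under [X in _ - X]eq_bigr do rewrite mulrCA.
rewrite -mulr_sumr.
rewrite (@sum_ind n (fun l => f i l)) ltn_ord (@sum_indS n (fun l => f i l)).
case: (nat_of_ord j) (ltn_ord j) => [|j'] // lt.
by rewrite (ltnW lt).
Qed.

Lemma colred n (a : nat -> rat) :
  \det (\matrix_(i < n.+1, j < n.+1)
     (if (i : nat) == 0%N then 4 ^+ j else a (i.-1 + j)))
  = \det (\matrix_(i < n, j < n) (a (i + j)%N.+1 - 4 * a (i + j)%N)).
Proof.
set f := fun i j : nat => if i == 0%N then 4 ^+ j else a (i.-1 + j).
have -> : \matrix_(i < n.+1, j < n.+1)
     (if (i : nat) == 0%N then 4 ^+ j else a (i.-1 + j)) = \matrix_(i, j) f i j.
  by apply/matrixP => i j; rewrite !mxE.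
have -> : \det (\matrix_(i < n.+1, j < n.+1) f i j)
   = \det ((\matrix_(i < n.+1, j < n.+1) f i j) *m Umx n.+1)
  by rewrite det_mulmx det_Umx mulr1.
rewrite (expand_det_row _ ord0) (bigD1 ord0) //= big1.
  rewrite addr0 mulU /cofactor.
  have -> : f ord0 ord0 - 4 * 0 = 1 by rewrite /f /= mulr0 subr0.
  rewrite /= expr0 !mul1r.
  congr (\det _); apply/matrixP => i j.
  rewrite [LHS]mxE [LHS]mxE mulU /f /= mxE /bump /= !add0n add1n; by rewrite -[(i + j).+1]addnS.
move=> j ne0.
have [j' ej] : exists j', nat_of_ord j = j'.+1.
  by case: j ne0 => [[|j'] ?] //= _; exists j'.
by rewrite mulU ej /f /= exprS subrr mul0r.
Qed.



Definition Lmx n : 'M[rat]_n := \matrix_(i, k) ell i k.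

Definition gT (l k : nat) : rat :=
  ((l == k)%:R *+ 2 + (l.+1 == k)%:R + (l == k.+1)%:R).

Definition Tmx n : 'M[rat]_n := \matrix_(l, k) gT l k.

Lemma det_Lmx n : \det (Lmx n) = 1.
Proof.
rewrite det_trig.
  by rewrite big1 // => i _; rewrite mxE ell_diag.
by apply/is_trig_mxP => i j lt; rewrite mxE ell_gt.
Qed.

Lemma LLt n (i j : 'I_n) : (Lmx n *m (Lmx n)^T) i j = ell (i + j) 0.
Proof.
rewrite mxE.
under eq_bigr do rewrite !mxE.
rewrite -(big_mkord xpredT (fun k => ell i k * ell j k)).
by rewrite S_any ?S_val //; left.
Qed.

Lemma LT n (i k : 'I_n) : (Lmx n *m Tmx n) i k = ell i.+1 k.
Proof.
rewrite mxE.
have E : forall l : 'I_n, Lmx n i l * Tmx n l k =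
   2 * (ell i l * ((l : nat) == k)%:R) + ell i l * ((l : nat).+1 == k)%:R
   + ell i l * ((l : nat) == k.+1)%:R.
  by move=> l; rewrite !mxE /gT; ring.
rewrite (eq_bigr _ (fun l _ => E l)) !big_split /= -mulr_sumr.
rewrite (@sum_ind n (ell i)) ltn_ord (@sum_indS n (ell i)).
have -> : \sum_(l < n) ell i l * ((l : nat) == k.+1)%:R = ell i k.+1.
  rewrite (@sum_ind n (ell i)); case: ifP => // /negbT; rewrite -leqNgt => le.
  by rewrite ell_gt //; apply: leq_trans le; apply: ltn_ord.
rewrite ell_rec.
case: (nat_of_ord k) (ltn_ord k) => [|k'] lt /=.
  by rewrite mulr2n; ring.
by rewrite (ltnW lt) mulr2n; ring.
Qed.

Lemma LTLt n (i j : 'I_n) : (Lmx n *m Tmx n *m (Lmx n)^T) i j = ell (i + j).+1 0.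
Proof.
rewrite mxE.
under eq_bigr do rewrite LT !mxE.
rewrite -(big_mkord xpredT (fun k => ell i.+1 k * ell j k)).
by rewrite S_any ?S_val ?addSn //; right.
Qed.



Definition aa (j : nat) : rat := (j.+1)%:R / (j.+2)%:R.
Definition dd (i : nat) : rat := (i.+2)%:R / (i.+1)%:R.
Definition gB (i j : nat) : rat := (i == j)%:R * dd i + (i.+1 == j)%:R.

Definition Amx n : 'M[rat]_n :=
  \matrix_(i, j) (((i : nat) == j)%:R + ((i : nat) == j.+1)%:R * aa j).
Definition Bmx n : 'M[rat]_n := \matrix_(i, j) gB i j.

Lemma nz k : (k.+1)%:R != 0 :> rat.
Proof. by rewrite pnatr_eq0. Qed.

Ltac posn i := apply/andP; split; apply: lt0r_neq0; have := ler0n rat i; lra.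

Lemma entry i j : gB i j + (if i is i'.+1 then aa i' * gB i' j else 0) = gT i j.
Proof.
have h1 := nz i; have h2 := nz i.+1; have h3 := nz i.-1.
rewrite /gB /gT /aa /dd.
case: i h1 h2 h3 => [|i] h1 h2 h3.
  case: (eqVneq 0%N j) => [<-|ne] /=; first by rewrite mulr1n; field.
  by ring.
rewrite /= in h3.
case: (eqVneq i.+1 j) => [<-|ne].
  rewrite (_ : (i.+2 == i.+1) = false); last by apply/eqP; lia.
  rewrite (_ : (i == i.+1) = false); last by apply/eqP; lia.
  rewrite (_ : (i.+1 == i.+2) = false); last by apply/eqP; lia.
  rewrite /=. field. by posn i.
case: (eqVneq i j) => [<-|ne2].
  rewrite (_ : (i.+2 == i) = false); last by apply/eqP; lia.
  rewrite eqxx /=.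
  field. by posn i.
case: (eqVneq i.+2 j) => [<-|ne3].
  rewrite (_ : (i.+1 == i.+3) = false); last by apply/eqP; lia.
  rewrite /=; ring.
rewrite (_ : (i.+1 == j.+1) = false); last by apply/eqP; move/eqP: ne2; lia.
rewrite /=; ring.
Qed.

Lemma Tmx_LU n : Tmx n = Amx n *m Bmx n.
Proof.
apply/matrixP => i j; rewrite !mxE -entry.
have E : forall k : 'I_n, Amx n i k * Bmx n k j =
   gB k j * ((k : nat) == i)%:R + (aa k * gB k j) * ((k : nat).+1 == i)%:R.
  move=> k; rewrite !mxE (eq_sym (i : nat)) (eq_sym (i : nat)); ring.
rewrite (eq_bigr _ (fun k _ => E k)) big_split /=.
rewrite (@sum_ind n (fun k => gB k j)) ltn_ord.
rewrite (@sum_indS n (fun k => aa k * gB k j)).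
case: (nat_of_ord i) (ltn_ord i) => [|i'] // lt.
by rewrite (ltnW lt).
Qed.

Lemma det_Amx n : \det (Amx n) = 1.
Proof.
rewrite det_trig.
  rewrite big1 // => i _; rewrite mxE eqxx (_ : ((i : nat) == i.+1) = false) ?mul0r ?addr0 //.
  by apply/eqP; lia.
apply/is_trig_mxP => i j lt; rewrite mxE.
rewrite (_ : ((i : nat) == j) = false); last by apply/eqP; lia.
rewrite (_ : ((i : nat) == j.+1) = false); last by apply/eqP; lia.
by rewrite mul0r addr0.
Qed.

Lemma prod_dd n : \prod_(i < n) dd i = (n.+1)%:R.
Proof.
elim: n => [|n IH]; first by rewrite big_ord0.
rewrite big_ord_recr /= IH /dd; field.
by apply: lt0r_neq0; have := ler0n rat n; lra.
Qed.

Lemma det_Bmx n : \det (Bmx n) = (n.+1)%:R.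
Proof.
rewrite -det_tr det_trig.
  rewrite -prod_dd; apply: eq_bigr => i _; rewrite !mxE /gB eqxx.
  rewrite (_ : ((i : nat).+1 == i) = false) ?mul1r ?addr0 //.
  by apply/eqP; lia.
apply/is_trig_mxP => i j lt; rewrite !mxE /gB.
rewrite (_ : ((j : nat) == i) = false); last by apply/eqP; lia.
rewrite (_ : ((j : nat).+1 == i) = false); last by apply/eqP; lia.
by rewrite mul0r addr0.
Qed.

Lemma det_Tmx n : \det (Tmx n) = (n.+1)%:R.
Proof. by rewrite Tmx_LU det_mulmx det_Amx det_Bmx mul1r. Qed.



Lemma Pn_eval n : (Pn n).[4] = (-1) ^+ n.
Proof.
rewrite /Pn -horner_evalE -det_map_mx.
set M := (X in \det X).
have -> : M = \matrix_(i < n.+1, j < n.+1)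
    (if (i : nat) == 0%N then 4 ^+ j else (fun m => (cc m)%:R : rat) (i.-1 + j)).
  apply/matrixP => i j; rewrite !mxE /= horner_evalE.
  by case: ifP => _; rewrite ?hornerXn ?hornerC.
rewrite (@colred n (fun m => (cc m)%:R)) /=.
have -> : \matrix_(i < n, j < n)
    ((cc (i + j)%N.+1)%:R - 4 * (cc (i + j)%N)%:R : rat)
    = (-1) *: (Lmx n *m (Lmx n)^T).
  apply/matrixP => i j; rewrite mxE [RHS]mxE LLt ell_mom; ring.
by rewrite detZ det_mulmx det_tr det_Lmx mulr1.
Qed.

Lemma P1n_eval n : (P1n n).[4] = (-1) ^+ n * (n.+1)%:R.
Proof.
rewrite /P1n -horner_evalE -det_map_mx.
set M := (X in \det X).
have -> : M = \matrix_(i < n.+1, j < n.+1)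
    (if (i : nat) == 0%N then 4 ^+ j else (fun m => (cc m.+1)%:R : rat) (i.-1 + j)).
  apply/matrixP => i j; rewrite !mxE /= horner_evalE.
  case: ifP => [_|/negbT ne]; rewrite ?hornerXn ?hornerC //.
  by congr ((cc _)%:R); case: (nat_of_ord i) ne.
rewrite (@colred n (fun m => (cc m.+1)%:R)) /=.
have -> : \matrix_(i < n, j < n)
    ((cc (i + j)%N.+2)%:R - 4 * (cc (i + j)%N.+1)%:R : rat)
    = (-1) *: (Lmx n *m Tmx n *m (Lmx n)^T).
  apply/matrixP => i j; rewrite mxE [RHS]mxE LTLt ell_mom; ring.
by rewrite detZ !det_mulmx det_tr det_Lmx det_Tmx mulr1 mul1r.
Qed.

Theorem lemma9p1 (n : nat) : (1 <= n)%N ->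
  (tn n).[4] = 1 /\ (t1n n).[4] = (n.+1)%:R / (n.*2.+1)%:R.
Proof.
move=> _; rewrite /tn /t1n !hornerZ Pn_eval P1n_eval.
have S2 : (-1) ^+ n * (-1) ^+ n = 1 :> rat by rewrite -exprMn mulrNN mulr1 expr1n.
split; first by [].
by rewrite mulrA [_ / _ * _]mulrAC S2 mul1r mulrC.
Qed.
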